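(* Let $\mathcal{H}$ be a complex Hilbert space and let $A\in\mathcal{B}(\mathcal{H})$ be a positive operator with $\dim R(A)\ge 2$. Let $T,S\in\mathcal{B}_A(\mathcal{H})$ and $q\in\mathbb{C}$ with $0<|q|\le 1$. Then \[ |q|^2\,w_{q,A}(TS)\le 4\,w_{q,A}(T)\,w_{q,A}(S). \]
   Context: $A$ induces the semi-inner product $\langle x,y\rangle_A=\langle Ax,y\rangle$ and seminorm $\|x\|_A=\sqrt{\langle x,x\rangle_A}$. $\mathcal{B}_A(\mathcal{H})$ is the set of operators $T$ admitting an $A$-adjoint, i.e. an operator $W$ with $\langle Tx,y\rangle_A=\langle x,Wy\rangle_A$ for all $x,y$. The $A$-$q$-numerical radius is $w_{q,A}(T)=\sup\{|\langle Tx,y\rangle_A| : \|x\|_A=\|y\|_A=1,\ \langle x,y\rangle_A=q\}$. *)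

(* Defs.v *)
From HB Require Import structures.
From mathcomp Require Import all_boot all_order all_algebra.
From mathcomp Require Import boolp classical_sets reals ereal.
From mathcomp Require Export complex.

Set Implicit Arguments.
Unset Strict Implicit.
Unset Printing Implicit Defensive.

Import Order.TTheory GRing.Theory Num.Theory.
Local Open Scope ring_scope.
Local Open Scope classical_set_scope.

Section Hilbert.
Variable R : realType.
Local Notation C := R[i].
Variable V : lmodType C.
Variable ip : V -> V -> C.

Definition is_inner_product : Prop :=
  [/\ (forall (a : C) (x y z : V), ip (a *: x + y) z = a * ip x z + ip y z),
      (forall x y : V, ip x y = Num.conj (ip y x)),
      (forall x : V, 0 <= ip x x) &
      (forall x : V, ip x x = 0 -> x = 0)].

Definition hnorm (x : V) : R := Num.sqrt (@complex.Re R (ip x x)).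

Definition hcomplete : Prop :=
  forall u : nat -> V,
    (forall e : R, 0 < e -> exists N : nat, forall m n : nat,
        (N <= m)%N -> (N <= n)%N -> hnorm (u m - u n) < e) ->
    exists l : V, forall e : R, 0 < e -> exists N : nat, forall n : nat,
        (N <= n)%N -> hnorm (u n - l) < e.

Definition is_complex_Hilbert_space : Prop := is_inner_product /\ hcomplete.

Definition bounded_operator (T : V -> V) : Prop :=
  (forall (a : C) (x y : V), T (a *: x + y) = a *: T x + T y) /\
  exists M : R, forall x : V, hnorm (T x) <= M * hnorm x.

Definition positive_operator (A : V -> V) : Prop :=
  bounded_operator A /\ forall x : V, 0 <= ip (A x) x.

(* dim R(A) >= 2: the range of A contains two linearly independent vectors *)
Definition range_dim_ge2 (A : V -> V) : Prop :=
  exists x y : V, forall a b : C,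
    a *: A x + b *: A y = 0 -> a = 0 /\ b = 0.

Definition ipA (A : V -> V) (x y : V) : C := ip (A x) y.
Definition normA (A : V -> V) (x : V) : R := Num.sqrt (@complex.Re R (ipA A x x)).

Definition has_A_adjoint (A T : V -> V) : Prop :=
  bounded_operator T /\
  exists W : V -> V, bounded_operator W /\
    forall x y : V, ipA A (T x) y = ipA A x (W y).

Definition wqA (A : V -> V) (q : C) (T : V -> V) : \bar R :=
  ereal_sup [set r : \bar R | exists x y : V,
     [/\ normA A x = 1, normA A y = 1, ipA A x y = q &
         r = (@complex.Re R `|ipA A (T x) y|)%:E]].

End Hilbert.

(* Main.v *)
Require Import Defs.
From HB Require Import structures.
From mathcomp Require Import all_boot all_order all_algebra.
From mathcomp Require Import boolp classical_sets reals ereal.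
From mathcomp Require Import complex.
From mathcomp Require Import ring lra.
Local Open Scope complex_scope.
Import Order.TTheory GRing.Theory Num.Theory.
Set Implicit Arguments. Unset Strict Implicit. Unset Printing Implicit Defensive.
Local Open Scope ring_scope.

Lemma final_ereal (R : realType) (c : R) (wTS wT wS : \bar R) : (0 < c)%R ->
  (0 <= wT)%E -> (0 <= wS)%E ->
  (forall t s, wT = t%:E -> wS = s%:E -> (wTS <= (4 * t * s / c)%:E)%E) ->
  (wT = 0%:E -> (wTS <= 0)%E) -> (wS = 0%:E -> (wTS <= 0)%E) ->
  (c%:E * wTS <= 4%:E * wT * wS)%E.
Proof.
move=> c0 hT hS hfin hT0 hS0.
have zero : (wTS <= 0)%E -> (c%:E * wTS <= 4%:E * wT * wS)%E.
  move=> h; apply: le_trans (mule_ge0_le0 _ h) _; first by rewrite lee_fin ltW.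
  by rewrite !mule_ge0.
have four : (0 < 4 :> R)%R by [].
case: wT hT hfin hT0 zero => [t| |] // t0 hfin hT0 zero.
- case: wS hS hfin hS0 zero => [s| |] // s0 hfin hS0 zero.
  + apply: le_trans (lee_wpmul2l _ (hfin t s erefl erefl)) _.
      by rewrite lee_fin ltW.
    by rewrite -!EFinM lee_fin mulrC divfK // gt_eqF.
  + rewrite lee_fin in t0.
    have [t00|tp] := eqVneq t 0; first by apply: zero; apply: hT0; rewrite t00.
    have tp' : (0 < t)%R by rewrite lt0r tp.
    by rewrite -EFinM gt0_muley ?leey // lte_fin mulr_gt0.
- case: wS hS hfin hS0 zero => [s| |] // s0 hfin hS0 zero.
  + rewrite lee_fin in s0.
    have [s00|sp] := eqVneq s 0; first by apply: zero; apply: hS0; rewrite s00.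
    have sp' : (0 < s)%R by rewrite lt0r sp.
    by rewrite gt0_muley ?lte_fin // gt0_mulye ?leey // lte_fin.
  + by rewrite gt0_muley ?lte_fin // ?mulyy ?leey.
Qed.
Section Basic.
Variable R : realType.
Local Notation C := R[i].
Local Notation cj := (@Num.conj C).
Local Notation RC := (@real_complex_def R (Phant R)).

Definition nrm (z : C) : R := complex.Re `|z|.

Lemma nrmC z : `|z| = RC (nrm z).
Proof. by rewrite /nrm RRe_real // normr_real. Qed.

Lemma nrm_ge0 z : 0 <= nrm z.
Proof. by rewrite -ler0c -nrmC normr_ge0. Qed.

Lemma nrmM x y : nrm (x * y) = nrm x * nrm y.
Proof. by apply: complexI; rewrite rmorphM /= -!nrmC normrM. Qed.

Lemma nrmD x y : nrm (x + y) <= nrm x + nrm y.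
Proof. by rewrite -lecR rmorphD /= -!nrmC ler_normD. Qed.

Lemma nrmN x : nrm (- x) = nrm x.
Proof. by rewrite /nrm normrN. Qed.

Lemma nrmJ x : nrm (cj x) = nrm x.
Proof. by rewrite /nrm norm_conjC. Qed.

Lemma nrmR (r : R) : 0 <= r -> nrm (RC r) = r.
Proof. by move=> r0; apply: complexI; rewrite -nrmC ger0_norm // ler0c. Qed.

Lemma nrm_eq0 x : nrm x = 0 -> x = 0.
Proof. by move=> h; apply/eqP; rewrite -normr_eq0 nrmC h. Qed.

Lemma nrm_sq x : RC (nrm x ^+ 2) = x * cj x.
Proof. by rewrite rmorphXn /= -nrmC normCK. Qed.

Lemma ge0_RC (z : C) : 0 <= z -> z = RC (complex.Re z) /\ 0 <= complex.Re z.
Proof.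
case: z => a b; rewrite lecE /= => /andP[/eqP -> ha]; split => //.
Qed.

Lemma RC_ge0 (r : R) : (0 <= RC r) = (0 <= r).
Proof. exact: ler0c. Qed.

Lemma cjRC (r : R) : cj (RC r) = RC r.
Proof. exact: conjc_real. Qed.

Lemma RCD (a b : R) : RC (a + b) = RC a + RC b. Proof. exact: rmorphD. Qed.
Lemma RCB (a b : R) : RC (a - b) = RC a - RC b. Proof. exact: rmorphB. Qed.
Lemma RCN (a : R) : RC (- a) = - RC a. Proof. exact: rmorphN. Qed.
Lemma RCM (a b : R) : RC (a * b) = RC a * RC b. Proof. exact: rmorphM. Qed.
Lemma RCV (a : R) : RC (a^-1) = (RC a)^-1. Proof. exact: fmorphV. Qed.
Lemma RC1 : RC 1 = 1. Proof. exact: rmorph1. Qed.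
Lemma RC0 : RC 0 = 0. Proof. exact: rmorph0. Qed.
Lemma RC2 : RC 2 = 2. Proof. exact: rmorph_nat. Qed.

Lemma nrm_sq2 x : RC (nrm x) * RC (nrm x) = x * cj x.
Proof. by rewrite -RCM -nrm_sq. Qed.

Lemma RC_nat n : RC n%:R = n%:R. Proof. exact: rmorph_nat. Qed.

End Basic.
Section Sesq.
Variable R : realType.
Local Notation C := R[i].
Local Notation cj := (@Num.conj C).
Local Notation RC := (@real_complex_def R (Phant R)).
Variable V : lmodType C.
Variable ip : V -> V -> C.
Variable A : V -> V.
Hypothesis ipD : forall (a : C) x y z, ip (a *: x + y) z = a * ip x z + ip y z.
Hypothesis ipC : forall x y, ip x y = cj (ip y x).
Hypothesis ipdef : forall x, ip x x = 0 -> x = 0.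
Hypothesis Alin : forall (a : C) x y, A (a *: x + y) = a *: A x + A y.
Hypothesis Apos : forall x, 0 <= ip (A x) x.

Local Notation f := (ipA ip A).

Definition lin (T : V -> V) := forall (a : C) x y, T (a *: x + y) = a *: T x + T y.

Lemma dbl0 (c : C) : c = c + c -> c = 0.
Proof. by move=> h; apply/eqP; rewrite -(subrr c) {2}h addrK. Qed.

Lemma eq_via (g1 g2 e1 e2 : C) : e1 = e2 -> g1 - g2 = e2 - e1 -> g1 = g2.
Proof. by move=> -> h; apply/eqP; rewrite -subr_eq0 h subrr. Qed.

Lemma fD a x y z : f (a *: x + y) z = a * f x z + f y z.
Proof. by rewrite /ipA Alin ipD. Qed.

Lemma f0 z : f 0 z = 0.
Proof.
by apply: dbl0; have := fD 1 0 0 z; rewrite scaler0 addr0 mul1r.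
Qed.

Lemma fZ a x z : f (a *: x) z = a * f x z.
Proof. by have := fD a x 0 z; rewrite addr0 f0 addr0. Qed.

Lemma fDl x y z : f (x + y) z = f x z + f y z.
Proof. by have := fD 1 x y z; rewrite scale1r mul1r. Qed.

Lemma fN x z : f (- x) z = - f x z.
Proof. by rewrite -scaleN1r fZ mulN1r. Qed.

Lemma fDr a x y z : f x (a *: y + z) = cj a * f x y + f x z.
Proof. by rewrite /ipA ipC ipD rmorphD rmorphM /= -!ipC. Qed.

Lemma fZr a x y : f x (a *: y) = cj a * f x y.
Proof.
have := fDr a x y 0; rewrite addr0 => ->.
have -> : f x 0 = 0.
  by apply: dbl0; have := fDr 1 x 0 0; rewrite scaler0 addr0 rmorph1 mul1r.
by rewrite addr0.
Qed.

Lemma fDr2 x y z : f x (y + z) = f x y + f x z.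
Proof. by have := fDr 1 x y z; rewrite scale1r rmorph1 mul1r. Qed.

Lemma f0r x : f x 0 = 0.
Proof. by have := fZr 0 x 0; rewrite scale0r rmorph0 mul0r. Qed.

Lemma fNr x z : f x (- z) = - f x z.
Proof. by rewrite -scaleN1r fZr rmorphN rmorph1 mulN1r. Qed.

Lemma fpos x : 0 <= f x x.
Proof. exact: Apos. Qed.

Lemma fherm x y : f x y = cj (f y x).
Proof.
set a := f x y; set b := f y x.
have real v : cj (f v v) = f v v by rewrite geC0_conj // fpos.
have E1 : a + b = cj a + cj b.
  have := real (x + y).
  rewrite fDl !fDr2 -/a -/b !rmorphD /= !real.
  move=> H; eapply eq_via; first exact: H. ring.
have E2 : 'i * (b - a) = 'i * (cj a - cj b).
  have := real ('i *: y + x).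
  rewrite fD !fDr -/a -/b.
  have ci : cj 'i = - 'i by rewrite conjCi.
  have cN : forall z, cj (- z) = - cj z by move=> z; rewrite rmorphN.
  rewrite !(rmorphD, rmorphM, rmorphN) /= !real ?ci ?conjCK; rewrite ?cN ?ci ?opprK => H.
  eapply eq_via; first exact: H.
  ring.
have E3 : b - a = cj a - cj b.
  by apply: (mulfI (x := 'i)) => //; rewrite neq0Ci.
have : 2 * b = 2 * cj a.
  have -> : 2 * b = (a + b) + (b - a) by ring.
  by rewrite E1 E3; ring.
have two : (2 : C) != 0 by rewrite pnatr_eq0.
by move/(mulfI two) => ->; rewrite conjCK.
Qed.


Definition P x := complex.Re (f x x).

Lemma fRC x : f x x = RC (P x).
Proof. by have [] := ge0_RC (fpos x). Qed.

Lemma P_ge0 x : 0 <= P x.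
Proof. by have [] := ge0_RC (fpos x). Qed.

Lemma quad (n a b : R) : 0 <= n -> 0 <= a -> 0 <= b ->
  (forall t, 0 <= t ^+ 2 * n * b - 2 * t * n + a) -> n <= a * b.
Proof.
move=> n0 a0 b0 H.
have [n00|npos] := eqVneq n 0; first by rewrite n00 mulr_ge0.
have {npos}npos : 0 < n by rewrite lt0r npos.
have [b00|bpos] := eqVneq b 0.
  have := H ((a + 1) / (2 * n)).
  have e : (a + 1) / (2 * n) * n = (a + 1) / 2.
    by field; rewrite gt_eqF.
  rewrite b00 mulr0 sub0r -mulrA e; lra.
have {bpos}bpos : 0 < b by rewrite lt0r bpos.
have := H b^-1.
have e : b^-1 ^+ 2 * n * b = n / b by field; rewrite gt_eqF.
rewrite e => h.
have : n / b <= a by lra.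
by rewrite ler_pdivrMr.
Qed.

Lemma cjM x y : cj (x * y) = cj x * cj y. Proof. exact: rmorphM. Qed.
Lemma cjN x : cj (- x) = - cj x. Proof. exact: rmorphN. Qed.

Lemma CS2 x y : nrm (f x y) ^+ 2 <= P x * P y.
Proof.
set c := f x y.
apply: quad; rewrite ?exprn_ge0 ?nrm_ge0 ?P_ge0 // => t.
set l := - (RC t * c).
rewrite -RC_ge0.
suff -> : RC (t ^+ 2 * nrm c ^+ 2 * P y - 2 * t * nrm c ^+ 2 + P x) = f (l *: y + x) (l *: y + x) by exact: fpos.
rewrite fD !fDr -/c (fherm y x) -/c !fRC /l cjN cjM cjRC.
rewrite !(RCD, RCB, RCM) RCN !RCM RC2 !nrm_sq2.
ring.
Qed.

Lemma CS x y : nrm (f x y) <= Num.sqrt (P x) * Num.sqrt (P y).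
Proof.
rewrite -sqrtrM ?P_ge0 // -(ger0_norm (nrm_ge0 (f x y))) -sqrtr_sqr.
by rewrite ler_sqrt ?mulr_ge0 ?P_ge0 // CS2.
Qed.

Lemma null x : P x = 0 -> A x = 0.
Proof.
move=> h; apply: ipdef; apply: nrm_eq0; apply/eqP; rewrite eq_le nrm_ge0 andbT.
by have := CS x (A x); rewrite h sqrtr0 mul0r.
Qed.

Lemma nullf x z : P x = 0 -> f x z = 0.
Proof.
move=> h; apply: nrm_eq0; apply/eqP; rewrite eq_le nrm_ge0 andbT.
by have := CS x z; rewrite h sqrtr0 mul0r.
Qed.

Lemma nullf2 x z : P x = 0 -> f z x = 0.
Proof. by move=> h; rewrite fherm nullf // rmorph0. Qed.

Lemma fZZ a x : f (a *: x) (a *: x) = a * cj a * f x x.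
Proof. by rewrite fZ fZr mulrA [a * _]mulrC. Qed.

Lemma fRR (k : R) x y : f (RC k *: x) y = RC k * f x y.
Proof. exact: fZ. Qed.

Lemma fRR2 (k : R) x y : f x (RC k *: y) = RC k * f x y.
Proof. by rewrite fZr cjRC. Qed.

Lemma normalize x : 0 < P x ->
  f (RC (Num.sqrt (P x))^-1 *: x) (RC (Num.sqrt (P x))^-1 *: x) = 1.
Proof.
move=> h; rewrite fRR fRR2 fRC -!RCM -RC1; congr RC.
have s0 : 0 < Num.sqrt (P x) by rewrite sqrtr_gt0.
rewrite -{3}(sqr_sqrtr (ltW h)).
by field; rewrite gt_eqF.
Qed.

Lemma fP1 x : f x x = 1 -> P x = 1.
Proof. by rewrite fRC -RC1 => /complexI. Qed.

Lemma orth_step v w : f v v = 1 ->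
  (exists u, [/\ f u u = 1, f v u = 0 & f u v = 0]) \/ A w = f w v *: A v.
Proof.
move=> hv.
set w' := (- f w v) *: v + w.
have hw' : f w' v = 0 by rewrite /w' fD hv mulr1 addrC subrr.
have [hp|hp] := boolP (0 < P w').
  left; exists (RC (Num.sqrt (P w'))^-1 *: w'); split.
  - exact: normalize.
  - by rewrite fherm fRR hw' mulr0 rmorph0.
  - by rewrite fRR hw' mulr0.
right; have h0 : P w' = 0.
  by apply/eqP; rewrite eq_le P_ge0 andbT leNgt.
have := null h0; rewrite /w' Alin => /eqP.
by rewrite scaleNr addrC subr_eq0 => /eqP.
Qed.

Lemma ortho (x0 y0 : V)
  (hind : forall a b : C, a *: A x0 + b *: A y0 = 0 -> a = 0 /\ b = 0) v :
  f v v = 1 -> exists u, [/\ f u u = 1, f v u = 0 & f u v = 0].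
Proof.
move=> hv.
case: (orth_step y0 hv) => [//|hy].
case: (orth_step x0 hv) => [//|hx].
exfalso.
have [c1 c0'] : f y0 v = 0 /\ - f x0 v = 0.
  apply: (hind (f y0 v) (- f x0 v)).
  by rewrite hx hy !scalerA mulNr scaleNr mulrC subrr.
have c0 : f x0 v = 0 by apply/eqP; rewrite -oppr_eq0 c0'.
move: (hind 1 0); rewrite hx c0 scale0r scaler0 scale0r addr0 => /(_ erefl) [].
by move/eqP; rewrite oner_eq0.
Qed.

Lemma pairf_r x a b v u : f x (a *: v + b *: u) = cj a * f x v + cj b * f x u.
Proof. by rewrite fDr fZr. Qed.

Lemma pairf_l z a b v u : f (a *: v + b *: u) z = a * f v z + b * f u z.
Proof. by rewrite fD fZ. Qed.

Variable q : C.
Hypothesis q1 : nrm q <= 1.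

Definition bnd (T : V -> V) (t : R) := forall x y, f x x = 1 -> f y y = 1 -> f x y = q ->
  nrm (f (T x) y) <= t.

Lemma diag_bound (x0 y0 : V)
  (hind : forall a b : C, a *: A x0 + b *: A y0 = 0 -> a = 0 /\ b = 0)
  T t : lin T -> bnd T t -> forall v, f v v = 1 -> nrm q * nrm (f (T v) v) <= t.
Proof.
move=> hT hb v hv.
have [u [hu hvu huv]] := ortho hind hv.
set s := Num.sqrt (1 - nrm q ^+ 2).
have s2 : s ^+ 2 = 1 - nrm q ^+ 2.
  by rewrite sqr_sqrtr // subr_ge0 expr_le1 ?nrm_ge0.
have key r : r ^+ 2 = s ^+ 2 ->
    nrm (q * f (T v) v + RC r * f (T v) u) <= t.
  move=> hr.
  have := hb v (cj q *: v + RC r *: u) hv.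
  rewrite !pairf_r !pairf_l !cjRC conjCK hv hu hvu huv.
  rewrite !mulr0 !mulr1 !addr0 !add0r.
  apply => //.
  rewrite -nrm_sq2 -RC1 -!RCM -RCD; congr RC.
  have : r * r = 1 - nrm q ^+ 2 by rewrite -expr2 hr s2.
  nra.
have h1 := key s erefl.
have h2 := key (- s) (sqrrN s).
rewrite RCN mulNr in h2.
set al := q * f (T v) v in h1 h2; set ga := RC s * f (T v) u in h1 h2.
have e : nrm (2 * al) <= 2 * t.
  have -> : 2 * al = (al + ga) + (al - ga) by ring.
  by apply: le_trans (nrmD _ _) _; lra.
rewrite nrmM -RC2 nrmR // /al nrmM in e.
lra.
Qed.

Lemma dbl0V (w : V) : w = w + w -> w = 0.
Proof. by move=> h; apply/eqP; rewrite -(subrr w) {2}h addrK. Qed.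

Lemma lin0 T : lin T -> T 0 = 0.
Proof.
move=> hT; apply: dbl0V; have := hT 1 0 0.
by rewrite scaler0 addr0 scale1r.
Qed.

Lemma linZ T a x : lin T -> T (a *: x) = a *: T x.
Proof. by move=> hT; have := hT a x 0; rewrite addr0 lin0 // addr0. Qed.

Lemma full_diag (x0 y0 : V)
  (hind : forall a b : C, a *: A x0 + b *: A y0 = 0 -> a = 0 /\ b = 0)
  T t : lin T -> bnd T t -> 0 <= t -> forall v, nrm q * nrm (f (T v) v) <= t * P v.
Proof.
move=> hT hb t0 v.
have [hp|hp] := boolP (0 < P v); last first.
  have h0 : P v = 0 by apply/eqP; rewrite eq_le P_ge0 andbT leNgt.
  by rewrite nullf2 // -RC0 nrmR // h0 !mulr0.
set k := (Num.sqrt (P v))^-1.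
have := diag_bound hind hT hb (normalize hp).
rewrite -/k linZ // fRR fRR2 mulrA -RCM nrmM nrmR; first last.
  by rewrite mulr_ge0 // invr_ge0 sqrtr_ge0.
have kk : k * k * P v = 1.
  rewrite /k -{3}(sqr_sqrtr (ltW hp)).
  by field; rewrite gt_eqF // sqrtr_gt0.
move=> h.
have e : nrm q * nrm (f (T v) v) = nrm q * (k * k * nrm (f (T v) v)) * P v.
  by rewrite -[LHS]mulr1 -kk; ring.
by rewrite e; apply: ler_wpM2r => //; exact: P_ge0.
Qed.

Lemma jtrick (j g1 g2 K : C) : j * j = -1 -> g1 - g2 = (j * j + 1) * K -> g1 = g2.
Proof. by move=> jj h; apply/eqP; rewrite -subr_eq0 h jj addNr mul0r. Qed.

Lemma expand T c y z : lin T ->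
  f (T (c *: y + z)) (c *: y + z) =
  c * cj c * f (T y) y + c * f (T y) z + cj c * f (T z) y + f (T z) z.
Proof. by move=> hT; rewrite hT fD !fDr; ring. Qed.

Lemma lin_id : lin (fun w => w).
Proof. by []. Qed.

Lemma polar (x0 y0 : V)
  (hind : forall a b : C, a *: A x0 + b *: A y0 = 0 -> a = 0 /\ b = 0)
  T t : lin T -> bnd T t -> 0 <= t -> forall z y, f z z = 1 -> f y y = 1 ->
  nrm q * nrm (f (T z) y) <= 2 * t.
Proof.
move=> hT hb t0 z y hz hy.
pose j : C := 'i.
have jj : j * j = -1 by rewrite -expr2 sqrCi.
have cjj : cj j = - j by rewrite conjCi.
have cj1 : cj 1 = 1 by rewrite rmorph1.
have cjm1 : cj (-1) = -1 by rewrite cjN cj1.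
have cjmj : cj (- j) = j by rewrite cjN cjj opprK.
pose v1 := 1 *: y + z; pose v2 := j *: y + z; pose v3 := (-1) *: y + z; pose v4 := (- j) *: y + z.
have E : 4 * f (T z) y =
    f (T v1) v1 + j * f (T v2) v2 - f (T v3) v3 - j * f (T v4) v4.
  rewrite /v1 /v2 /v3 /v4 !expand // cj1 cjj cjm1 cjmj.
  apply: (@jtrick j _ _ (2 * f (T z) y - 2 * f (T y) z) jj); ring.
have Es : f v1 v1 + f v2 v2 + f v3 v3 + f v4 v4 = 4 * f y y + 4 * f z z.
  have ex := fun c => @expand (fun w => w) c y z lin_id.
  rewrite /v1 /v2 /v3 /v4 !ex cj1 cjj cjm1 cjmj.
  apply: (@jtrick j _ _ (- 2 * f y y) jj); ring.
rewrite hy hz !fRC -!RCD in Es.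
have {}Es : P v1 + P v2 + P v3 + P v4 = 4 * 1 + 4 * 1.
  by apply: complexI; rewrite Es !RCD !RCM RC1 RC_nat.
have nj : nrm j = 1 by rewrite /nrm normCi.
have hs : 4 * nrm (f (T z) y) <=
   nrm (f (T v1) v1) + nrm (f (T v2) v2) + nrm (f (T v3) v3) + nrm (f (T v4) v4).
  have -> : 4 * nrm (f (T z) y) = nrm (4 * f (T z) y).
    by rewrite nrmM -(RC_nat R 4) nrmR.
  rewrite E.
  apply: le_trans (nrmD _ _) _; rewrite nrmN nrmM nj mul1r.
  apply: lerD => //.
  apply: le_trans (nrmD _ _) _; rewrite nrmN.
  apply: lerD => //.
  by apply: le_trans (nrmD _ _) _; rewrite nrmM nj mul1r.
have h1 := full_diag hind hT hb t0 v1.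
have h2 := full_diag hind hT hb t0 v2.
have h3 := full_diag hind hT hb t0 v3.
have h4 := full_diag hind hT hb t0 v4.
have hq := nrm_ge0 q.
have := ler_wpM2l hq hs; rewrite !mulrDr => h.
have : t * (P v1 + P v2 + P v3 + P v4) = t * (4 * 1 + 4 * 1) by rewrite Es.
rewrite !mulrDr => h'.
lra.
Qed.

Lemma self_val w : 0 < P w ->
  f w (RC (Num.sqrt (P w))^-1 *: w) = RC (Num.sqrt (P w)).
Proof.
move=> hp; rewrite fRR2 fRC -RCM; congr RC.
rewrite -{2}(sqr_sqrtr (ltW hp)).
by field; rewrite gt_eqF // sqrtr_gt0.
Qed.

Lemma self_val2 w : 0 < P w ->
  f (RC (Num.sqrt (P w))^-1 *: w) w = RC (Num.sqrt (P w)).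
Proof.
move=> hp; rewrite fRR fRC -RCM; congr RC.
rewrite -{2}(sqr_sqrtr (ltW hp)).
by field; rewrite gt_eqF // sqrtr_gt0.
Qed.

Lemma a_bnd (x0 y0 : V)
  (hind : forall a b : C, a *: A x0 + b *: A y0 = 0 -> a = 0 /\ b = 0)
  S s : lin S -> bnd S s -> 0 <= s -> forall x, f x x = 1 ->
  nrm q * Num.sqrt (P (S x)) <= 2 * s.
Proof.
move=> hS hb s0 x hx.
have [hp|hp] := boolP (0 < P (S x)); last first.
  have h0 : P (S x) = 0 by apply/eqP; rewrite eq_le P_ge0 andbT leNgt.
  by rewrite h0 sqrtr0 mulr0 mulr_ge0.
have := polar hind hS hb s0 hx (normalize hp).
by rewrite self_val // nrmR // sqrtr_ge0.
Qed.

Lemma b_bnd (x0 y0 : V)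
  (hind : forall a b : C, a *: A x0 + b *: A y0 = 0 -> a = 0 /\ b = 0)
  T W t : lin T -> (forall x y, f (T x) y = f x (W y)) -> bnd T t -> 0 <= t ->
  forall y, f y y = 1 -> nrm q * Num.sqrt (P (W y)) <= 2 * t.
Proof.
move=> hT hW hb t0 y hy.
have [hp|hp] := boolP (0 < P (W y)); last first.
  have h0 : P (W y) = 0 by apply/eqP; rewrite eq_le P_ge0 andbT leNgt.
  by rewrite h0 sqrtr0 mulr0 mulr_ge0.
have := polar hind hT hb t0 (normalize hp) hy.
by rewrite hW self_val2 // nrmR // sqrtr_ge0.
Qed.

Lemma elem (T S W : V -> V) : (forall x y, f (T x) y = f x (W y)) -> forall x y,
  nrm (f (T (S x)) y) <= Num.sqrt (P (S x)) * Num.sqrt (P (W y)).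
Proof. by move=> hW x y; rewrite hW CS. Qed.

Lemma main_sec (x0 y0 : V)
  (hind : forall a b : C, a *: A x0 + b *: A y0 = 0 -> a = 0 /\ b = 0)
  (T S W : V -> V) : lin T -> lin S -> (forall x y, f (T x) y = f x (W y)) ->
  0 < nrm q ->
  ((nrm q ^+ 2)%:E * wqA ip A q (T \o S) <= 4%:R%:E * wqA ip A q T * wqA ip A q S)%E.
Proof.
move=> hT hS hW nq0.
have nA1 x : normA ip A x = 1 <-> f x x = 1.
  split.
    move=> h; have Px : P x = 1.
      by rewrite -(sqr_sqrtr (P_ge0 x)); move: h; rewrite /normA => ->; rewrite expr1n.
    by rewrite fRC Px RC1.
  by move=> h; rewrite /normA h /= sqrtr1.
pose adm x y := [/\ f x x = 1, f y y = 1 & f x y = q].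
have ub (U : V -> V) x y : adm x y -> ((nrm (f (U x) y))%:E <= wqA ip A q U)%E.
  move=> [hx hy hxy]; apply: ereal_sup_ubound; exists x, y.
  by split; [exact: (nA1 x).2 | exact: (nA1 y).2 | done | done].
have bndU (U : V -> V) t : wqA ip A q U = t%:E -> bnd U t.
  move=> e x y hx hy hxy; rewrite -lee_fin -e; exact: ub.
have [[x1 [y1 a1]] | nadm] := pselect (exists x y, adm x y); last first.
  have -> : wqA ip A q (T \o S) = (-oo)%E.
    apply/ereal_sup_ninfty => e [x [y [hx hy hxy _]]]; exfalso; apply: nadm.
    by exists x, y; split; [exact: (nA1 x).1 | exact: (nA1 y).1 | done].
  by rewrite gt0_muleNy ?lte_fin ?exprn_gt0 // leNye.
have w0 (U : V -> V) : (0 <= wqA ip A q U)%E.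
  by apply: le_trans (ub U _ _ a1); rewrite lee_fin nrm_ge0.
have sq0 w : 0 <= Num.sqrt (P w) by apply: sqrtr_ge0.
apply: final_ereal => //; first by rewrite exprn_gt0.
- move=> t s eT eS.
  have t0 : 0 <= t by rewrite -lee_fin -eT w0.
  have s0 : 0 <= s by rewrite -lee_fin -eS w0.
  apply: ge_ereal_sup => e [x [y [hx hy hxy ->]]]; rewrite lee_fin.
  have hx' := (nA1 x).1 hx; have hy' := (nA1 y).1 hy.
  have ha := a_bnd hind hS (bndU S s eS) s0 hx'.
  have hb := b_bnd hind hT hW (bndU T t eT) t0 hy'.
  have he := elem S hW x y.
  rewrite ler_pdivlMr ?exprn_gt0 //=.
  set a := Num.sqrt (P (S x)) in ha he; set b := Num.sqrt (P (W y)) in hb he.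
  apply: le_trans (ler_wpM2r (exprn_ge0 2 (nrm_ge0 q)) he) _.
  have -> : a * b * nrm q ^+ 2 = (nrm q * a) * (nrm q * b) by ring.
  have -> : 4 * t * s = (2 * s) * (2 * t) by ring.
  by apply: ler_pM => //; apply: mulr_ge0; rewrite ?nrm_ge0 ?sq0.
- move=> eT.
  apply: ge_ereal_sup => e [x [y [hx hy hxy ->]]]; rewrite lee_fin.
  have hy' := (nA1 y).1 hy.
  have hb := b_bnd hind hT hW (bndU T 0 eT) (lexx 0) hy'.
  have he := elem S hW x y.
  set a := Num.sqrt (P (S x)) in he; set b := Num.sqrt (P (W y)) in hb he.
  have b0 : b <= 0 by rewrite -(pmulr_rle0 _ nq0); lra.
  apply: le_trans he _; exact: mulr_ge0_le0 (sq0 _) b0.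
- move=> eS.
  apply: ge_ereal_sup => e [x [y [hx hy hxy ->]]]; rewrite lee_fin.
  have hx' := (nA1 x).1 hx.
  have ha := a_bnd hind hS (bndU S 0 eS) (lexx 0) hx'.
  have he := elem S hW x y.
  set a := Num.sqrt (P (S x)) in ha he; set b := Num.sqrt (P (W y)) in he.
  have a0 : a <= 0 by rewrite -(pmulr_rle0 _ nq0); lra.
  apply: le_trans he _; exact: mulr_le0_ge0 a0 (sq0 _).
Qed.
End Sesq.

Local Close Scope complex_scope.
Unset Implicit Arguments.
Set Strict Implicit.

Theorem mainTheorem4 (R : realType) (V : lmodType R[i]) (ip : V -> V -> R[i])
    (hH : is_complex_Hilbert_space ip)
    (A : V -> V) (hA : positive_operator ip A) (hdim : range_dim_ge2 A)
    (T S : V -> V) (hT : has_A_adjoint ip A T) (hS : has_A_adjoint ip A S)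
    (q : R[i]) (hq0 : 0 < `|q|) (hq1 : `|q| <= 1) :
  (((@complex.Re R `|q|) ^+ 2)%:E * wqA ip A q (T \o S)
    <= (4%:R)%:E * wqA ip A q T * wqA ip A q S)%E.
Proof.
move: hH => [[ipD ipC _ ipdef] _].
case: hA => [[Alin _] Apos].
case: hdim => x0 [y0 hind].
case: hT => [[Tlin _] [W [_ hW]]].
case: hS => [[Slin _] _].
have nq0 : 0 < nrm q.
  rewrite lt0r nrm_ge0 andbT; apply/eqP => h; move: hq0.
  by rewrite nrmC h RC0 ltxx.
have nq1 : nrm q <= 1 by move: hq1; rewrite nrmC -RC1 lecR.
exact: (main_sec ipD ipC ipdef Alin Apos nq1 hind Tlin Slin hW nq0).
Qed.
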